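(* Let $G$ be a finite simple $d$-regular graph on $n\ge 3$ vertices that contains at least one Hamiltonian cycle. Choose edges of $G$ one at a time in a uniformly random order (without repetition), stopping as soon as every vertex has degree at least two; call the resulting random graph $G_\omega$. Then $$\mathbb{E}\left(\frac{\#\{\text{Hamiltonian cycles of } G \text{ contained in } G_\omega\}}{\#\{\text{Hamiltonian cycles of } G\}}\right) = \frac{2}{\binom{n+d-2}{n}} - \frac{1}{\binom{n+2d-4}{n}}.$$
   Context: Precisely: a uniformly random ordering $(e_1,\dots,e_m)$ of the $m$ edges of $G$ is chosen, $k$ is the least index such that the graph on $V(G)$ with edges $e_1,\dots,e_k$ has minimum degree at least $2$, and $G_\omega$ is that graph. Hamiltonian cycles are counted as subgraphs (edge sets). *)

(* Defs.v *)
From mathcomp Require Import all_boot all_order all_fingroup all_algebra.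
Set Implicit Arguments. Unset Strict Implicit. Unset Printing Implicit Defensive.
Import GRing.Theory Num.Theory.

(* A simple graph on the finite vertex type T is a symmetric irreflexive
   relation e; edges are represented as 2-element vertex sets. *)
Section Graph.
Variables (T : finType) (e : rel T).

Definition edges : {set {set T}} :=
  [set f : {set T} | [exists x, exists y, e x y && (f == [set x; y])]].

Definition deg_in (F : seq {set T}) (v : T) : nat :=
  #|[set f : {set T} | (f \in F) && (v \in f)]|.

Definition mindeg2 (F : seq {set T}) : bool := [forall v : T, 2 <= deg_in F v].

Definition ham_cycle_along (c : seq T) (H : {set {set T}}) : bool :=
  path.cycle e c && (H == [set [set x; next c x] | x : T]).

Definition ham_cycle (H : {set {set T}}) : bool :=
  [exists p : {perm T}, ham_cycle_along [seq p x | x <- enum T] H].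

Definition ham_cycles : {set {set {set T}}} := [set H | ham_cycle H].

Definition stop_index (s : seq {set T}) : nat :=
  find (fun k => mindeg2 (take k s)) (iota 0 (size s).+1).

Definition G_omega (s : seq {set T}) : {set {set T}} :=
  [set f | f \in take (stop_index s) s].

Definition edge_orderings : seq (seq {set T}) := permutations (enum edges).

Definition ham_fraction (s : seq {set T}) : rat :=
  (#|[set H in ham_cycles | H \subset G_omega s]|%:R / #|ham_cycles|%:R)%R.

Definition expected_ham_fraction : rat :=
  ((\sum_(s <- edge_orderings) ham_fraction s) / (size edge_orderings)%:R)%R.

End Graph.

(* Main.v *)
Require Import Defs.
From mathcomp Require Import all_boot all_order all_fingroup all_algebra.
From mathcomp Require Import zify ring.
Set Implicit Arguments. Unset Strict Implicit. Unset Printing Implicit Defensive.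

Section Gen.
Variable X : finType.

Lemma index_filter_lt (S : pred X) (s : seq X) x y :
  x \in s -> y \in s -> S x -> S y ->
  (index x (filter S s) < index y (filter S s)) = (index x s < index y s).
Proof.
elim: s => [//|z s IH]; rewrite !inE => xs ys Sx Sy /=.
case: (eqVneq z x) => [ezx|zx].
  subst z; case: (eqVneq x y) => [exy|zy]; first by subst y; rewrite Sx /= eqxx ltnn.
  by rewrite Sx /= eqxx (negbTE zy).
case: (eqVneq z y) => [ezy|zy].
  by subst z; rewrite Sy /= eqxx (negbTE zx).
move: xs ys; rewrite [x == z]eq_sym [y == z]eq_sym (negbTE zx) (negbTE zy) /= => xs ys.
by case: (S z) => /=; rewrite ?(negbTE zx) ?(negbTE zy) ?ltnS; apply: IH.
Qed.

Lemma in_drop_uniq (s : seq X) x i : uniq s -> x \in s ->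
  (x \in drop i s) = (i <= index x s).
Proof.
move=> us xs.
have := us; rewrite -{1}(cat_take_drop i s) cat_uniq => /and3P[_ hd _].
have : x \in take i s ++ drop i s by rewrite cat_take_drop.
rewrite mem_cat in_take //.
case: (ltnP (index x s) i) => lt /= H.
  apply/negP => xd; move/hasP: hd; apply; exists x => //.
  by rewrite in_take.
by [].
Qed.

Lemma relabel (t t' : seq X) : uniq t -> perm_eq t t' ->
  exists s : {perm X}, map s t = t' /\ forall x, x \notin t -> s x = x.
Proof.
move=> ut ptt.
have ut' : uniq t' by rewrite -(perm_uniq ptt).
have sz : size t = size t' by apply: perm_size.
pose f x := if x \in t then nth x t' (index x t) else x.
have fin x : x \in t -> f x \in t.
  move=> xt; rewrite /f xt (perm_mem ptt) mem_nth // -sz index_mem //.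
have finj : injective f.
  move=> x y; rewrite /f.
  case xt: (x \in t); case yt: (y \in t) => //.
  - rewrite (set_nth_default y) ?(@set_nth_default _ t' y x) -?sz ?index_mem //.
    move/eqP; rewrite nth_uniq -?sz ?index_mem // => /eqP.
    by apply: index_inj.
  - move=> Hf; have := fin x xt; rewrite /f xt => /=.
    by rewrite Hf yt.
  - move=> Hf; have := fin y yt; rewrite /f yt => /=.
    by rewrite -Hf xt.
exists (perm finj); split.
  case Et: t => [|a l].
    by move: sz; rewrite Et => /esym/size0nil.
  rewrite -Et; apply: (@eq_from_nth _ a); first by rewrite size_map.
  move=> i; rewrite size_map => lti.
  rewrite (nth_map a) // permE /f mem_nth // index_uniq //.
  by apply: set_nth_default; rewrite -sz.
by move=> x /negbTE xt; rewrite permE /f xt.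
Qed.

Lemma perms_map_stab (E : seq X) (sg : {perm X}) : uniq E ->
  (forall x, (sg x \in E) = (x \in E)) ->
  forall s, (map sg s \in permutations E) = (s \in permutations E).
Proof.
move=> uE st s; rewrite !mem_permutations; apply/idP/idP => P.
  apply: uniq_perm => //; first by rewrite -(map_inj_uniq (@perm_inj _ sg)) (perm_uniq P).
  by move=> z; rewrite -st -(perm_mem P) mem_map //; apply: perm_inj.
apply: uniq_perm => //; first by rewrite (map_inj_uniq (@perm_inj _ sg)) (perm_uniq P).
move=> y; rewrite -{1}(permKV sg y) mem_map; last by apply: perm_inj.
by rewrite (perm_mem P) -st permKV.
Qed.

Lemma count_perm_stab (E : seq X) (sg : {perm X}) (Q : pred (seq X)) : uniq E ->
  (forall x, (sg x \in E) = (x \in E)) ->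
  count Q (permutations E) = count (fun s => Q (map sg s)) (permutations E).
Proof.
move=> uE st.
have -> : count (fun s => Q (map sg s)) (permutations E) =
          count Q (map (map sg) (permutations E)) by rewrite count_map.
apply/seq.permP; apply: uniq_perm.
- exact: permutations_uniq.
- by rewrite (map_inj_uniq (inj_map (@perm_inj _ sg))) permutations_uniq.
move=> s.
have -> : s = map sg (map (sg^-1)%g s) by rewrite -map_comp (eq_map (permKV sg)) map_id.
by rewrite (mem_map (inj_map (@perm_inj _ sg))) perms_map_stab.
Qed.

Lemma count_pred_and_eq (T : eqType) (P : pred T) (l : seq T) x :
  uniq l -> x \in l -> count (fun t => P t && (x == t)) l = P x.
Proof.
move=> ul xl.
rewrite (eq_count (a2 := fun t => P x && (x == t))); last first.
  by move=> t /=; case: eqP => [->|]; rewrite ?andbF ?andbT.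
case: (P x) => /=; last by rewrite count_pred0.
rewrite (eq_count (a2 := pred1 x)); last by move=> t /=; rewrite eq_sym.
by rewrite count_uniq_mem // xl.
Qed.

Lemma rou (E : seq X) (S : pred X) (P : pred (seq X)) : uniq E ->
  count (fun s => P (filter S s)) (permutations E) * (size (filter S E))`! =
  (size E)`! * count P (permutations (filter S E)).
Proof.
move=> uE.
set Sl := filter S E; set Le := permutations E; set Ls := permutations Sl.
have uSl : uniq Sl by apply: filter_uniq.
have uLs : uniq Ls by apply: permutations_uniq.
have fLs s : s \in Le -> filter S s \in Ls.
  by rewrite !mem_permutations => pe; apply: perm_filter.
pose c t := count (fun s => filter S s == t) Le.
have decomp (Q : pred (seq X)) :
    count (fun s => Q (filter S s)) Le = \sum_(t <- Ls | Q t) c t.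
  rewrite /c.
  under eq_bigr => t _ do rewrite -sum1_count big_mkcond /=.
  rewrite exchange_big /= -sum1_count big_mkcond /=; apply: eq_big_seq => s sLe.
  rewrite -big_mkcondr /= sum1_count count_pred_and_eq //; last exact: fLs.
have cconst t : t \in Ls -> c t = c Sl.
  rewrite mem_permutations => pt.
  have ut : uniq t by rewrite (perm_uniq pt).
  have [sg [mt fx]] := relabel ut (pt : perm_eq t Sl).
  have tin x : (sg x \in t) = (x \in t).
    case xt: (x \in t); last by rewrite fx ?xt.
    by rewrite (perm_mem pt) -mt mem_map ?xt //; apply: perm_inj.
  have stab (Q : pred X) : (forall y, y \in t -> Q y) -> forall x, Q (sg x) = Q x.
    move=> sub x; case xt: (x \in t); last by rewrite fx ?xt.
    by rewrite !sub // tin.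
  have tE : forall y, y \in t -> (mem E) y.
    by move=> x; rewrite (perm_mem pt) mem_filter => /andP[].
  have tS : forall y, y \in t -> S y.
    by move=> x; rewrite (perm_mem pt) mem_filter => /andP[].
  rewrite /c [RHS](count_perm_stab _ uE (stab (mem E) tE)).
  apply: eq_count => s /=.
  rewrite filter_map (eq_filter (a2 := S)); last by move=> x /=; rewrite (stab S tS).
  by rewrite -mt (inj_eq (inj_map (@perm_inj _ sg))).
have key (Q : pred (seq X)) : count (fun s => Q (filter S s)) Le = count Q Ls * c Sl.
  rewrite decomp big_seq_cond (eq_bigr (fun _ => c Sl)); last by move=> t /andP[tl _]; apply: cconst.
  by rewrite -big_seq_cond big_const_seq iter_addn_0 mulnC.
have := key predT; rewrite (eq_count (a2 := predT)) // count_predT.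
rewrite /Ls /Le !size_permutations // => h.
rewrite key h count_predT size_permutations //.
rewrite -/Ls; set a := count P Ls; set b := c Sl; set z := (size Sl)`!.
by rewrite mulnC [a * b]mulnC mulnA.
Qed.

Definition cond (H B : {set X}) (g : X) (t : seq X) : bool :=
  [forall g' in H, (g' != g) ==> (index g' t < index g t)] &&
  [forall f in B, index g t < index f t].

Lemma count_cond_S (H B : {set X}) g (Sl : seq X) :
  uniq Sl -> Sl =i (H :|: B) -> [disjoint H & B] -> g \in H ->
  count (cond H B g) (permutations Sl) = (#|H| - 1)`! * #|B|`!.
Proof.
move=> uSl eSl dHB gH.
have dis z : z \in H -> z \in B -> False.
  by move=> zH zB; move: (disjointFr dHB zH); rewrite zB.
set Hl := enum (H :\ g); set Bl := enum B.
set L := [seq x ++ g :: y | x <- permutations Hl, y <- permutations Bl].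
have memx x z : x \in permutations Hl -> (z \in x) = (z \in H :\ g).
  by rewrite mem_permutations => /perm_mem ->; rewrite mem_enum.
have memy y z : y \in permutations Bl -> (z \in y) = (z \in B).
  by rewrite mem_permutations => /perm_mem ->; rewrite mem_enum.
rewrite -size_filter.
have -> : size (filter (cond H B g) (permutations Sl)) = size L.
  apply: perm_size; apply: uniq_perm.
  - by rewrite filter_uniq // permutations_uniq.
  - apply: allpairs_uniq; rewrite ?permutations_uniq //.
    move=> [x y] [x' y'] /allpairsP[[a b] [/= ain bin [-> ->]]].
    move=> /allpairsP[[a' b'] [/= ain' bin' [-> ->]]] /= /eqP.
    rewrite eqseq_cat; last first.
      by move: ain ain'; rewrite !mem_permutations => /perm_size -> /perm_size ->.
    by case/andP => /eqP -> /eqP [->].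
  move=> t; rewrite mem_filter mem_permutations.
  apply/andP/allpairsP => [[ct pt] | [[x y] [/= xin yin ->]]].
    have ut : uniq t by rewrite (perm_uniq pt).
    have memt z : (z \in t) = (z \in H :|: B) by rewrite (perm_mem pt) eSl.
    have gt : g \in t by rewrite memt inE gH.
    move: ct; rewrite /cond => /andP[/forallP c1 /forallP c2].
    set k := index g t.
    exists (take k t, drop k.+1 t); split => /=.
    - rewrite mem_permutations; apply: uniq_perm; rewrite ?take_uniq ?enum_uniq //.
      move=> z; rewrite mem_enum.
      case zt: (z \in t); last first.
        have -> : (z \in take k t) = false by apply/negP => /mem_take; rewrite zt.
        by apply/esym/negP => /setD1P [_ zH]; move: zt; rewrite memt inE zH.
      rewrite in_take //; apply/idP/idP.
        move=> lt; apply/setD1P; split.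
          by apply/eqP => ezg; move: lt; rewrite ezg ltnn.
        move: zt; rewrite memt inE => /orP[//|zB].
        by have := c2 z; rewrite zB /= ltnNge => /negP; rewrite ltnW.
      by case/setD1P => zg zH; have := c1 z; rewrite zH zg.
    - rewrite mem_permutations; apply: uniq_perm; rewrite ?drop_uniq ?enum_uniq //.
      move=> z; rewrite mem_enum.
      case zt: (z \in t); last first.
        case: (boolP (z \in B)) => zB; last first.
          by apply/negP => /mem_drop; rewrite zt.
        by move: zt; rewrite memt inE zB orbT.
      rewrite in_drop_uniq //; apply/idP/idP.
        move=> lt; move: zt; rewrite memt inE => /orP[zH|//].
        case: (eqVneq z g) => [ezg|zg]; first by move: lt; rewrite ezg ltnn.
        by have := c1 z; rewrite zH zg /= ltnNge ltnW.
      by move=> zB; have := c2 z; rewrite zB.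
    - by rewrite -[LHS](cat_take_drop k) [drop k t](drop_nth g) ?index_mem // nth_index.
  have gx : g \notin x by rewrite (memx _ _ xin) !inE eqxx.
  have gy : g \notin y by rewrite (memy _ _ yin); apply/negP => /(dis _ gH).
  have ux : uniq x by move: xin; rewrite mem_permutations => /perm_uniq ->; apply: enum_uniq.
  have uy : uniq y by move: yin; rewrite mem_permutations => /perm_uniq ->; apply: enum_uniq.
  split; [apply/andP; split | ].
    apply/forallP => g'; apply/implyP => g'H; apply/implyP => g'g.
    have g'x : g' \in x by rewrite (memx _ _ xin) !inE g'g.
    by rewrite !index_cat g'x (negbTE gx) /= eqxx addn0 index_mem.
  apply/forallP => f; apply/implyP => fB.
  have fx : f \notin x by rewrite (memx _ _ xin) !inE; apply/negP => /andP[_ /(dis _)]; apply.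
  have gf : g != f by apply/eqP => egf; apply: (dis g gH); rewrite egf.
  by rewrite !index_cat (negbTE fx) (negbTE gx) /= eqxx (negbTE gf) addn0 addnS ltnS leq_addr.
  apply: uniq_perm => //.
    rewrite cat_uniq ux /= gy uy /= andbT negb_or gx /=.
    apply/hasPn => z zy; rewrite (memx _ _ xin) (memy _ _ yin) in zy *.
    by apply/negP => /setD1P[_ zH]; apply: (dis z).
  move=> z; rewrite eSl mem_cat inE (memx _ _ xin) (memy _ _ yin) !inE.
  by case: (eqVneq z g) => [->|]; rewrite ?gH //= orbF.
rewrite size_allpairs !size_permutations ?enum_uniq // -!cardE.
by rewrite (cardsD1 g H) gH add1n subSS subn0.
Qed.

Lemma count_last_before (E : seq X) (H B : {set X}) g :
  uniq E -> {subset H <= E} -> {subset B <= E} -> [disjoint H & B] -> g \in H ->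
  count (cond H B g) (permutations E) * (#|H| + #|B|)`! =
  (size E)`! * ((#|H| - 1)`! * #|B|`!).
Proof.
move=> uE sH sB dHB gH.
set S := fun x => x \in H :|: B.
have -> : count (cond H B g) (permutations E) =
          count (fun s => cond H B g (filter S s)) (permutations E).
  apply: eq_in_count => s; rewrite mem_permutations => pe.
  have ins z : z \in H :|: B -> z \in s.
    by rewrite (perm_mem pe) inE => /orP[/sH|/sB].
  have inS z : z \in H :|: B -> S z by [].
  have gHB : g \in H :|: B by rewrite inE gH.
  rewrite /cond; congr andb; apply: eq_forallb_in => z /= zH.
    have zHB : z \in H :|: B by rewrite inE zH.
    by rewrite index_filter_lt ?ins.
  have zHB : z \in H :|: B by rewrite inE zH orbT.
  by rewrite index_filter_lt ?ins.
have sz : size (filter S E) = #|H| + #|B|.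
  have uS : uniq (filter S E) by apply: filter_uniq.
  rewrite -(card_uniqP uS).
  have -> : #|filter S E| = #|H :|: B|.
    apply: eq_card => z; rewrite mem_filter /S.
    by case: (boolP (z \in H :|: B)) => //=; rewrite inE => /orP[/sH|/sB].
  by rewrite cardsU (disjoint_setI0 dHB) cards0 subn0.
rewrite -sz rou // (count_cond_S (Sl := filter S E)) //.
  by apply: filter_uniq.
by move=> z; rewrite mem_filter /S; case: (boolP (z \in H :|: B)) => //=; rewrite inE => /orP[/sH|/sB].
Qed.

End Gen.

Lemma index_next (T : eqType) (c : seq T) x : uniq c -> x \in c ->
  index (next c x) c = (index x c).+1 %% size c.
Proof.
move=> uc xc; rewrite next_nth xc.
case: c uc xc => [//|y c'] uc xc.
have lt : index x (y :: c') < size (y :: c') by rewrite index_mem.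
have [lt'|ge] := ltnP (index x (y :: c')) (size c').
  have -> : nth y c' (index x (y :: c')) = nth y (y :: c') (index x (y :: c')).+1 by [].
  rewrite index_uniq //= ?ltnS // modn_small //.
have eq : index x (y :: c') = size c'.
  by apply/eqP; rewrite eqn_leq ge andbT -ltnS; exact: lt.
rewrite nth_default ?eq // /= eqxx /= modnn //.
Qed.

Lemma next_next_neq (T : eqType) (c : seq T) x : uniq c -> x \in c -> 3 <= size c ->
  next c (next c x) != x.
Proof.
move=> uc xc s3; apply/negP => /eqP h.
have := congr1 (fun z => index z c) h => /=.
rewrite index_next ?mem_next // index_next //.
have := index_mem x c; rewrite xc => lt.
move: (index x c) (size c) lt s3 => i n lt s3.
case: (ltnP i.+1 n) => [l1|g1].
  rewrite (modn_small l1).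
  case: (ltnP i.+2 n) => [l2|g2].
    by rewrite (modn_small l2) => /eqP; rewrite -addn2 -{2}(addn0 i) eqn_add2l.
  have e2 : i.+2 = n by lia.
  by rewrite e2 modnn => i0; lia.
have e1 : i.+1 = n by lia.
by rewrite e1 modnn modn_small; lia.
Qed.

Section Graph.
Variables (T : finType) (e : rel T) (d : nat).
Hypotheses (esym : symmetric e) (eirr : irreflexive e)
  (ereg : forall v, #|[set w | e v w]| = d) (n3 : 3 <= #|T|).

Lemma edgesP f : reflect (exists x y, e x y /\ f = [set x; y]) (f \in edges e).
Proof.
rewrite inE; apply: (iffP existsP) => [[x /existsP[y /andP[exy /eqP->]]]|[x [y [exy ->]]]].
  by exists x, y.
by exists x; apply/existsP; exists y; rewrite exy eqxx.
Qed.

Lemma edge_neq x y : e x y -> x != y.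
Proof. by move=> exy; apply/eqP => exy'; move: exy; rewrite exy' eirr. Qed.

Lemma edge2 f a b : f \in edges e -> a \in f -> b \in f -> a != b -> f = [set a; b].
Proof.
case/edgesP => x [y [exy ->]] /set2P[]-> /set2P[]-> //; rewrite ?eqxx //.
by rewrite setUC.
Qed.

Definition Eat v := [set f in edges e | v \in f].

Lemma card_Eat v : #|Eat v| = d.
Proof.
rewrite -(ereg v).
have -> : Eat v = [set [set v; w] | w in [set w | e v w]].
  apply/setP => f; rewrite [_ \in Eat v]in_set; apply/andP/imsetP.
    case=> /edgesP[x [y [exy ->]]] /set2P[]->.
      by exists y; rewrite ?inE.
    by exists x; rewrite ?inE 1?esym // setUC.
  case=> w; rewrite inE => evw ->; split; last by rewrite set21.
  by apply/edgesP; exists v, w.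
apply: card_in_imset => w w'; rewrite !inE => evw evw' eq.
have : w \in [set v; w'] by rewrite -eq set22.
by case/set2P => // ewv; move: evw; rewrite ewv eirr.
Qed.

Lemma ham_props H : ham_cycle e H ->
  [/\ {subset H <= edges e}, forall v, #|[set f in H | v \in f]| = 2 & #|H| = #|T|].
Proof.
case/existsP => p /andP[cyc /eqP HE].
set c := [seq p x | x <- enum T] in cyc HE.
have uc : uniq c by rewrite map_inj_uniq ?enum_uniq //; apply: perm_inj.
have allc x : x \in c by rewrite -[x](permKV p) mem_map ?mem_enum //; apply: perm_inj.
have szc : size c = #|T| by rewrite size_map cardT.
have ex x : e x (next c x) by apply: next_cycle.
have nn x : next c (next c x) != x by apply: next_next_neq; rewrite ?szc.
have pn := prev_next uc; have np := next_prev uc.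
split.
- by move=> f; rewrite HE => /imsetP[x _ ->]; apply/edgesP; exists x, (next c x).
- move=> v.
  have -> : [set f in H | v \in f] = [set [set v; next c v]; [set prev c v; v]].
    apply/setP => f; rewrite inE HE; apply/andP/set2P.
      case=> /imsetP[x _ ->] /set2P[]->; first by left.
      by right; rewrite pn.
    case=> ->; split; rewrite ?set21 ?set22 //.
      by apply: imset_f.
    by rewrite -{2}(np v); apply: imset_f.
  rewrite cards2; suff -> : ([set v; next c v] != [set prev c v; v]) by []; apply/negP => /eqP eq.
  have : next c v \in [set prev c v; v] by rewrite -eq set22.
  case/set2P => h.
    by move: (nn v); rewrite {1}h np eqxx.
  by move: (ex v); rewrite h eirr.
rewrite HE card_imset //.
move=> x y eq.
have : x \in [set y; next c y] by rewrite -eq set21.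
case/set2P => // exy.
have : next c x \in [set y; next c y] by rewrite -eq set22.
case/set2P => h.
  by move: (nn y); rewrite -exy h eqxx.
by apply: (can_inj pn).
Qed.

Lemma find_iota_mono (P : pred nat) m L :
  (forall i j, i <= j -> P i -> P j) -> P m -> m < L ->
  forall j, (j < find P (iota 0 L)) = ~~ P j.
Proof.
move=> mono Pm mL j.
have hasP : has P (iota 0 L) by apply/hasP; exists m; rewrite ?mem_iota.
have kL : find P (iota 0 L) < L by have := hasP; rewrite has_find size_iota.
have Pk : P (find P (iota 0 L)).
  by have := nth_find 0 hasP; rewrite nth_iota.
case: (ltnP j (find P (iota 0 L))) => jk.
  by have := before_find 0 jk; rewrite nth_iota ?(ltn_trans jk) // => ->.
by rewrite (mono _ _ jk Pk).
Qed.

Variable H : {set {set T}}.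
Hypotheses (Hsub : {subset H <= edges e}) (Hdeg : forall v, #|[set f in H | v \in f]| = 2).

Definition Nv v := [set f in edges e | (v \in f) && (f \notin H)].
Definition Ng (g : {set T}) := [set f in edges e | [exists v in g, v \in f] && (f \notin H)].
Definition lastH g (s : seq {set T}) := [forall g' in H, (g' != g) ==> (index g' s < index g s)].
Definition bef g (B : {set {set T}}) (s : seq {set T}) := [forall f in B, index g s < index f s].

Let Le := edge_orderings e.

Lemma memLe s : s \in Le -> uniq s /\ forall f, (f \in s) = (f \in edges e).
Proof.
rewrite /Le /edge_orderings mem_permutations => pe; split.
  by rewrite (perm_uniq pe) enum_uniq.
by move=> f; rewrite (perm_mem pe) mem_enum.
Qed.

Lemma last_exists s : s \in Le -> H != set0 -> exists2 g, g \in H & lastH g s.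
Proof.
move=> /memLe[us ms] /set0Pn[g0 g0H].
case: (@arg_maxnP _ g0 (mem H) (fun g => index g s) g0H) => g gH mx.
exists g => //; apply/forall_inP => g' g'H; apply/implyP => ne.
have le : index g' s <= index g s by exact: mx.
rewrite ltn_neqAle le andbT; apply/negP => /eqP eq.
move/negP: ne; apply; apply/eqP.
by apply: (@index_inj _ g s g' g) => //; rewrite ms; apply: Hsub.
Qed.

Lemma last_unique s g g' : g \in H -> g' \in H -> lastH g s -> lastH g' s -> g = g'.
Proof.
move=> gH g'H /forall_inP l1 /forall_inP l2.
case: (eqVneq g g') => // ne.
have := l1 _ g'H; rewrite eq_sym ne /= => lt1.
have := l2 _ gH; rewrite ne /= => lt2.
by move: (ltn_trans lt1 lt2); rewrite ltnn.
Qed.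

Lemma deg_lt2 s g0 v : s \in Le -> g0 \in H -> lastH g0 s ->
  (deg_in (take (index g0 s) s) v < 2) = (v \in g0) && bef g0 (Nv v) s.
Proof.
move=> /memLe[us ms] g0H /forall_inP lst.
rewrite /deg_in; set i0 := index g0 s.
set A := [set f | _].
set Hv := [set f in H | v \in f].
have sub1 : Hv :\ g0 \subset A.
  apply/subsetP => f; rewrite !inE => /and3P[ne fH vf]; rewrite vf andbT.
  rewrite in_take ?ms ?Hsub //; by have := lst f fH; rewrite ne.
have cHv : #|Hv :\ g0| = 2 - (v \in g0).
  by rewrite -(Hdeg v) -/Hv (cardsD1 g0 Hv) !inE g0H /= addKn.
case: (boolP (v \in g0)) => vg /=; last first.
  by apply/negbTE; rewrite -leqNgt; apply: leq_trans (subset_leq_card sub1); rewrite cHv (negbTE vg).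
case: (boolP (bef g0 (Nv v) s)) => hb.
  have : A \subset Hv :\ g0.
    apply/subsetP => f; rewrite !inE => /andP[ft vf].
    have fs : f \in s by apply: mem_take ft.
    have lt : index f s < i0 by rewrite -in_take.
    rewrite vf andbT; case: (boolP (f \in H)) => fH; last first.
      move/forall_inP: hb => /(_ f); rewrite inE -ms fs vf fH => /(_ isT).
      by rewrite ltnNge ltnW.
    by rewrite andbT; apply/eqP => efg; move: lt; rewrite efg ltnn.
  by move/subset_leq_card; rewrite cHv vg => h; apply: leq_ltn_trans h _.
move/forall_inPn: hb => [f]; rewrite inE => /and3P[fE vf fH]; rewrite -leqNgt => le.
have fs : f \in s by rewrite ms.
have ne : f != g0 by apply/eqP => efg; move: fH; rewrite efg g0H.
have lt : index f s < i0.
  rewrite ltn_neqAle le andbT; apply/eqP => eqi.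
  by move/eqP: ne; apply; apply: (@index_inj _ f s) => //; rewrite ms Hsub.
have sub2 : f |: (Hv :\ g0) \subset A.
  apply/subsetP => z; rewrite in_setU1 => /orP[/eqP ->|zin].
    by rewrite inE vf andbT in_take.
  exact: (subsetP sub1).
move/subset_leq_card: sub2; rewrite cardsU1 cHv vg !inE (negbTE fH) /= andbF /=.
by rewrite ltnNge => ->.
Qed.

Lemma subG s g0 : s \in Le -> g0 \in H -> lastH g0 s ->
  (H \subset G_omega s) = [exists v, (v \in g0) && bef g0 (Nv v) s].
Proof.
move=> sLe g0H lst; have [us ms] := memLe sLe.
have g0s : g0 \in s by rewrite ms Hsub.
set i0 := index g0 s.
have -> : (H \subset G_omega s) = (i0 < stop_index s).
  apply/subsetP/idP => [sub | lt h hH].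
    by have := sub _ g0H; rewrite inE in_take.
  rewrite inE in_take ?ms ?Hsub //; apply: leq_ltn_trans lt.
  case: (eqVneq h g0) => [->//|ne].
  by move/forall_inP: lst => /(_ h hH); rewrite ne => /ltnW.
rewrite /stop_index (@find_iota_mono _ i0.+1).
- rewrite /mindeg2 negb_forall; apply: eq_existsb => v.
  by rewrite -ltnNge deg_lt2.
- move=> i j ij /forallP m2; apply/forallP => v.
  apply: (leq_trans (m2 v)); apply: subset_leq_card; apply/subsetP => f.
  rewrite !inE => /andP[ft ->]; rewrite andbT.
  by move: ft; rewrite -(take_takel s ij); apply: mem_take.
- apply/forallP => v; rewrite /deg_in -(Hdeg v); apply: subset_leq_card.
  apply/subsetP => f; rewrite !inE => /andP[fH vf]; rewrite vf andbT.
  rewrite in_take ?ms ?Hsub // ltnS.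
  case: (eqVneq f g0) => [->//|ne].
  by move/forall_inP: lst => /(_ f fH); rewrite ne => /ltnW.
by rewrite ltnS index_mem.
Qed.

Lemma sum_pick (I : finType) (P : pred I) (g0 : I) (b : bool) :
  \sum_(g | P g) ((g == g0) && b) = P g0 && b.
Proof.
case: (boolP (P g0)) => Pg0.
  rewrite (bigD1 g0) //= eqxx big1 ?addn0 // => g /andP[_ /negbTE->] //.
rewrite big1 // => g Pg; case: eqP => // eg.
by move: Pg0; rewrite -eg Pg.
Qed.

Lemma H2set g : g \in H -> exists a b, a != b /\ g = [set a; b].
Proof.
by move/Hsub/edgesP => [x [y [exy ->]]]; exists x, y; split => //; apply: edge_neq.
Qed.

Lemma per_s s : s \in Le -> H != set0 ->
  (H \subset G_omega s) + \sum_(g in H) cond H (Ng g) g s =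
  \sum_v \sum_(g in H | v \in g) cond H (Nv v) g s.
Proof.
move=> sLe Hn0.
have [g0 g0H lst] := last_exists sLe Hn0.
have cl g B : g \in H -> cond H B g s = (g == g0) && bef g0 B s.
  move=> gH; case: (eqVneq g g0) => [->|ne]; first by move: lst; rewrite /lastH /cond /bef => ->.
  apply/negbTE; apply/negP => /andP[lg _]; move/eqP: ne; apply.
  exact: (last_unique gH g0H lg lst).
rewrite (eq_bigr (fun g => nat_of_bool ((g == g0) && bef g0 (Ng g) s))); last by move=> g gH; rewrite cl.
rewrite (bigD1 g0) //= eqxx big1 ?addn0; last by move=> g /andP[_ /negbTE->].
rewrite (eq_bigr (fun v => nat_of_bool ((v \in g0) && bef g0 (Nv v) s))); last first.
  move=> v _; rewrite (eq_bigr (fun g => nat_of_bool ((g == g0) && bef g0 (Nv v) s))).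
    by rewrite sum_pick g0H.
  by move=> g /andP[gH _]; rewrite cl.
have [a [b [ab eg0]]] := H2set g0H.
rewrite (subG sLe g0H lst) (eq_bigr (fun v => if v \in g0 then nat_of_bool (bef g0 (Nv v) s) else 0)); last first.
  by move=> v _; case: (v \in g0).
rewrite -big_mkcond /= eg0 big_setU1 ?inE //= big_set1.
have -> : [exists v, (v \in [set a; b]) && bef [set a; b] (Nv v) s] =
          bef [set a; b] (Nv a) s || bef [set a; b] (Nv b) s.
  apply/existsP/orP => [[v /andP[/set2P[]-> h]]|[h|h]]; [by left|by right| |].
    by exists a; rewrite set21 h.
  by exists b; rewrite set22 h.
have -> : bef [set a; b] (Ng [set a; b]) s = bef [set a; b] (Nv a) s && bef [set a; b] (Nv b) s.
  have eN : Ng [set a; b] = Nv a :|: Nv b.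
    apply/setP => f; rewrite in_setU [f \in Ng _]in_set [f \in Nv a]in_set [f \in Nv b]in_set.
    case: (f \in edges e) => //=; case: (f \in H) => /=; rewrite ?andbF //.
    rewrite !andbT; apply/exists_inP/orP => [[v /set2P[]-> h]|[h|h]]; [by left|by right| |].
      by exists a; rewrite ?set21 ?h.
    by exists b; rewrite ?set22 ?h.
  rewrite /bef eN; apply/forall_inP/andP => [h|[/forall_inP h1 /forall_inP h2] f].
    by split; apply/forall_inP => f fin; apply: h; rewrite inE fin ?orbT.
  by rewrite inE => /orP[/h1|/h2].
by case: (bef _ (Nv a) s); case: (bef _ (Nv b) s).
Qed.

Lemma count_sum (I : eqType) (a : pred I) (l : seq I) : count a l = \sum_(x <- l) a x.
Proof. by elim: l => [|x l IH]; rewrite ?big_nil ?big_cons //= IH. Qed.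

Lemma count_identity : H != set0 ->
  count (fun s => H \subset G_omega s) Le + \sum_(g in H) count (cond H (Ng g) g) Le =
  \sum_v \sum_(g in H | v \in g) count (cond H (Nv v) g) Le.
Proof.
move=> Hn0.
rewrite count_sum (eq_bigr (fun g => \sum_(s <- Le) nat_of_bool (cond H (Ng g) g s))); last first.
  by move=> g _; rewrite count_sum.
rewrite (eq_bigr (fun v => \sum_(s <- Le) \sum_(g in H | v \in g) nat_of_bool (cond H (Nv v) g s))); last first.
  move=> v _; rewrite (eq_bigr (fun g => \sum_(s <- Le) nat_of_bool (cond H (Nv v) g s))); last first.
    by move=> g _; rewrite count_sum.
  by rewrite exchange_big.
rewrite [X in _ + X]exchange_big [RHS]exchange_big /= -big_split /=.
by apply: eq_big_seq => s sLe; apply: per_s.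
Qed.

Lemma Ng2 a b : Ng [set a; b] = Nv a :|: Nv b.
Proof.
apply/setP => f; rewrite in_setU [f \in Ng _]in_set [f \in Nv a]in_set [f \in Nv b]in_set.
case: (f \in edges e) => //=; case: (f \in H) => /=; rewrite ?andbF //.
rewrite !andbT; apply/exists_inP/orP => [[v /set2P[]-> h]|[h|h]]; [by left|by right| |].
  by exists a; rewrite ?set21 ?h.
by exists b; rewrite ?set22 ?h.
Qed.

Lemma card_Nv v : #|Nv v| = d - 2.
Proof.
have := cardsID H (Eat v); rewrite card_Eat.
have -> : Eat v :&: H = [set f in H | v \in f].
  apply/setP => f; rewrite in_setI [f \in Eat v]in_set [f \in [set f in H | _]]in_set.
  by case fH: (f \in H); rewrite ?andbF ?andbT // Hsub.
have -> : Eat v :\: H = Nv v.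
  apply/setP => f; rewrite in_setD [f \in Eat v]in_set [f \in Nv v]in_set.
  by case: (f \in H); rewrite ?andbF ?andbT.
rewrite Hdeg; lia.
Qed.

Lemma card_Ng g : g \in H -> #|Ng g| = 2 * (d - 2).
Proof.
move=> gH; have [a [b [ab eg]]] := H2set gH.
rewrite eg Ng2 cardsU !card_Nv.
have -> : Nv a :&: Nv b = set0.
  apply/setP => f; rewrite in_setI [f \in Nv a]in_set [f \in Nv b]in_set in_set0.
  apply/negbTE/negP => /andP[/and3P[fE af fH] /and3P[_ bf _]].
  by move: fH; rewrite (edge2 fE af bf ab) -eg gH.
rewrite cards0; lia.
Qed.

Local Open Scope ring_scope.
Import GRing.Theory Num.Theory.

Lemma cnt_rat (B : {set {set T}}) (g : {set T}) : g \in H -> (forall f, f \in B -> (f \in edges e) && (f \notin H)) ->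
  ((count (cond H B g) Le)%:R : rat) =
  ((size (enum (edges e)))`! * ((#|H| - 1)`! * #|B|`!))%N%:R / ((#|H| + #|B|)`!)%N%:R.
Proof.
move=> gH hB.
have := @count_last_before _ (enum (edges e)) H B g (enum_uniq _).
rewrite /Le /edge_orderings => h.
rewrite -h //.
- by rewrite natrM mulfK // pnatr_eq0 -lt0n fact_gt0.
- by move=> f fH; rewrite mem_enum Hsub.
- by move=> f /hB /andP[]; rewrite mem_enum.
rewrite -setI_eq0; apply/eqP/setP => f; rewrite !inE.
by case fH: (f \in H) => //=; apply/negP => /hB; rewrite fH andbF.
Qed.

Lemma count_H_rat : #|H| = #|T| ->
  ((count (fun s => H \subset G_omega s) Le)%:R : rat) =
  ((size (enum (edges e)))`!)%:R *
  (2 / ('C(#|T| + d - 2, #|T|))%:R - 1 / ('C(#|T| + 2 * d - 4, #|T|))%:R)%R.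
Proof.
move=> Hcard.
have Hn0 : H != set0 by rewrite -card_gt0 Hcard; lia.
have /card_gt0P [v0 _] : (0 < #|T|)%N by lia.
have d2 : (2 <= d)%N.
  rewrite -(Hdeg v0) -(card_Eat v0); apply: subset_leq_card; apply/subsetP => f.
  rewrite [f \in [set f in H | _]]in_set [f \in Eat _]in_set => /andP[fH ->].
  by rewrite Hsub.
have := count_identity Hn0.
set Q := count _ Le.
move/(congr1 (fun x => (x%:R : rat))); rewrite natrD !natr_sum.
rewrite (eq_bigr (fun g => ((size (enum (edges e)))`! * ((#|H| - 1)`! * (2 * (d - 2))`!))%N%:R
   / ((#|H| + 2 * (d - 2))`!)%N%:R)); last first.
  move=> g gH; rewrite cnt_rat ?card_Ng //.
  by move=> f; rewrite inE => /and3P[-> _ ->].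
rewrite [RHS](eq_bigr (fun v => ((size (enum (edges e)))`! * ((#|H| - 1)`! * (d - 2)`!))%N%:R
   / ((#|H| + (d - 2))`!)%N%:R *+ 2)); last first.
  move=> v _.
  rewrite natr_sum.
  rewrite (eq_bigr (fun g => ((size (enum (edges e)))`! * ((#|H| - 1)`! * (d - 2)`!))%N%:R
   / ((#|H| + (d - 2))`!)%N%:R)); last first.
    move=> g /andP[gH vg]; rewrite cnt_rat ?card_Nv //.
    by move=> f; rewrite inE => /and3P[-> _ ->].
  rewrite (eq_bigl (fun g => g \in [set g in H | v \in g])); last by move=> g; rewrite inE.
  by rewrite sumr_const Hdeg.
rewrite sumr_const (eq_bigl (fun v => v \in [set: T])); last by move=> v; rewrite inE.
rewrite sumr_const cardsT Hcard.
have e1 : (#|T| + d - 2 = #|T| + (d - 2))%N by lia.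
have e2 : (#|T| + 2 * d - 4 = #|T| + 2 * (d - 2))%N by lia.
rewrite e1 e2.
set n := #|T|; set N := (size (enum (edges e)))`!.
set b1 := (d - 2)%N; set b2 := (2 * (d - 2))%N.
have fn : (n`! = n * (n - 1)`!)%N by rewrite /n; move: n3; case: #|T| => [//|m] _; rewrite factS subSS subn0.
have f1 := bin_fact (leq_addr b1 n); rewrite addKn in f1.
have f2 := bin_fact (leq_addr b2 n); rewrite addKn in f2.
rewrite -f1 -f2 => h.
have C1 : ('C(n + b1, n)%:R : rat) != 0 by rewrite pnatr_eq0 -lt0n bin_gt0 leq_addr.
have C2 : ('C(n + b2, n)%:R : rat) != 0 by rewrite pnatr_eq0 -lt0n bin_gt0 leq_addr.
have F0 k : ((k`!)%:R : rat) != 0 by rewrite pnatr_eq0 -lt0n fact_gt0.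
have n0 : (n%:R : rat) != 0 by rewrite pnatr_eq0 -lt0n; lia.
clearbody n N b1 b2 Q.
have hQ := canRL (addrK _) h.
rewrite hQ fn.
have Fa := F0 (n - 1)%N; have Fb1 := F0 b1; have Fb2 := F0 b2.
move: C1 C2 Fa Fb1 Fb2 n0.
set a := (n - 1)`!; set x1 := b1`!; set x2 := b2`!.
set c1 := 'C(n + b1, n); set c2 := 'C(n + b2, n).
clearbody a x1 x2 c1 c2 => C1 C2 Fa Fb1 Fb2 n0.
rewrite 10!natrM -3!mulr_natr.
field.
by rewrite C1 C2 n0 Fa Fb1 Fb2.
Qed.

End Graph.

Import GRing.Theory Num.Theory.

Theorem corollary3 (T : finType) (e : rel T) (d : nat) :
  symmetric e -> irreflexive e ->
  (forall v : T, #|[set w | e v w]| = d) ->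
  3 <= #|T| ->
  0 < #|ham_cycles e| ->
  expected_ham_fraction e =
    (2 / ('C(#|T| + d - 2, #|T|))%:R - 1 / ('C(#|T| + 2 * d - 4, #|T|))%:R)%R.
Proof.
move=> esym eirr ereg n3 hpos.
rewrite /expected_ham_fraction /ham_fraction.
have sz : size (edge_orderings e) = (size (enum (edges e)))`!.
  by rewrite size_permutations // enum_uniq.
rewrite sz -mulr_suml -natr_sum.
have -> : (\sum_(s <- edge_orderings e) #|[set H in ham_cycles e | H \subset G_omega s]|)%N =
          (\sum_(H in ham_cycles e) count (fun s => H \subset G_omega s) (edge_orderings e))%N.
  rewrite (eq_bigr (fun s => \sum_(H in ham_cycles e) nat_of_bool (H \subset G_omega s))%N).
    by rewrite exchange_big; apply: eq_bigr => H _; rewrite count_sum.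
  move=> s _; rewrite -sum1_card.
  rewrite (eq_bigl (fun H => (H \in ham_cycles e) && (H \subset G_omega s))); last first.
    by move=> H; rewrite inE.
  by rewrite big_mkcondr; apply: eq_bigr => H _; case: (H \subset _).
rewrite natr_sum.
rewrite (eq_bigr (fun _ => ((size (enum (edges e)))`!%:R *
   (2 / 'C(#|T| + d - 2, #|T|)%:R - 1 / 'C(#|T| + 2 * d - 4, #|T|)%:R))%R)); last first.
  move=> H; rewrite inE => hH.
  have [Hsub Hdeg Hcard] := ham_props eirr n3 hH.
  exact: count_H_rat.
rewrite sumr_const.
move: (2 / 'C(#|T| + d - 2, #|T|)%:R - 1 / 'C(#|T| + 2 * d - 4, #|T|)%:R)%R => t.
have h0 : (#|ham_cycles e|%:R != 0 :> rat)%R by rewrite pnatr_eq0 -lt0n.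
have f0 : ((size (enum (edges e)))`!%:R != 0 :> rat)%R by rewrite pnatr_eq0 -lt0n fact_gt0.
move: h0 f0; move: #|ham_cycles e| (size (enum (edges e)))`! => h N h0 f0.
rewrite -mulr_natr.
field.
by rewrite h0 f0.
Qed.
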